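(* Let $d\in\mathbb{N}$ and let $\mathcal{P}$ be a unit hypercube partition of $\mathbb{R}^{d}$. Then there exists $\vec{p}\in\mathbb{R}^{d}$ such that $|\mathcal{N}_{\overline{0}}(\vec{p})|\geq d+1$. Furthermore, $\mathcal{P}$ contains a $(d+1)$-clique.
   Context: A unit hypercube is a set $\vec{a}+[0,1)^d$ with $\vec{a}\in\mathbb{R}^d$; a unit hypercube partition of $\mathbb{R}^d$ is a partition all of whose members are unit hypercubes. For a partition $\mathcal{P}$ of $\mathbb{R}^d$ and $\vec{p}\in\mathbb{R}^d$, $\mathcal{N}_{\overline{0}}(\vec{p})=\{X\in\mathcal{P}:\vec{p}\in\overline{X}\}$, where $\overline{X}$ is the closure (in the usual topology). Two members $X,Y\in\mathcal{P}$ are adjacent if $\overline{X}\cap\overline{Y}\neq\emptyset$; an $n$-clique in $\mathcal{P}$ is a set of $n$ distinct members that are pairwise adjacent. *)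

(* Defs.v *)
(* points of R^d are row vectors 'rV[R]_d, R : realType,
   with the usual (product) topology from mathcomp-analysis. *)
From HB Require Import structures.
From mathcomp Require Import all_boot all_order all_algebra.
From mathcomp Require Import all_classical all_reals all_analysis.
Set Implicit Arguments. Unset Strict Implicit. Unset Printing Implicit Defensive.
Import Order.TTheory GRing.Theory Num.Theory.
Import numFieldNormedType.Exports.
Local Open Scope classical_set_scope.
Local Open Scope ring_scope.

Definition unit_cube (R : realType) (d : nat) (a : 'rV[R]_d) : set 'rV[R]_d :=
  [set x | forall i : 'I_d, a ord0 i <= x ord0 i /\ x ord0 i < a ord0 i + 1].

Definition is_unit_cube (R : realType) (d : nat) (X : set 'rV[R]_d) : Prop :=
  exists a : 'rV[R]_d, X = unit_cube a.

Definition is_partition (T : Type) (P : set (set T)) : Prop :=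
  (forall X, P X -> X !=set0) /\
  (forall X Y, P X -> P Y -> X <> Y -> X `&` Y = set0) /\
  (forall x : T, exists X, P X /\ X x).

Definition unit_cube_partition (R : realType) (d : nat) (P : set (set 'rV[R]_d)) : Prop :=
  is_partition P /\ (forall X, P X -> is_unit_cube X).

Definition N0 (R : realType) (d : nat) (P : set (set 'rV[R]_d)) (p : 'rV[R]_d)
  : set (set 'rV[R]_d) :=
  [set X | P X /\ closure X p].

Definition adjacent (R : realType) (d : nat) (X Y : set 'rV[R]_d) : Prop :=
  closure X `&` closure Y !=set0.

Definition has_clique (R : realType) (d : nat) (P : set (set 'rV[R]_d)) (n : nat) : Prop :=
  exists f : 'I_n -> set 'rV[R]_d,
    injective f /\ (forall i, P (f i)) /\
    (forall i j, i != j -> adjacent (f i) (f j)).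

(* Main.v *)
Require Import Defs.
From HB Require Import structures.
From mathcomp Require Import all_boot all_order all_algebra.
From mathcomp Require Import all_classical all_reals all_analysis.
From mathcomp Require Import lra.
Import Order.TTheory GRing.Theory Num.Theory.
Import numFieldNormedType.Exports.
Local Open Scope classical_set_scope.
Local Open Scope ring_scope.
Set Implicit Arguments. Unset Strict Implicit.

Lemma closure_cube (R : realType) (d : nat) (b p : 'rV[R]_d) :
  (forall j, b ord0 j <= p ord0 j /\ p ord0 j <= b ord0 j + 1) ->
  closure (unit_cube b) p.
Proof.
move=> H B /nbhs_ballP [e e0 sub].
have e0' : 0 < e by [].
pose del := Num.min (e / 2) (1/2).
have d0 : 0 < del by rewrite lt_min; apply/andP; split; lra.
have d1 : del <= e / 2 by rewrite ge_min lexx.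
have d2 : del <= 1 / 2 by rewrite ge_min lexx orbT.
pose y : 'rV[R]_d := \row_j Num.max (b ord0 j) (p ord0 j - del).
exists y; split.
  move=> j; rewrite /y mxE; have [h1 h2] := H j.
  have [h|h] := leP (b ord0 j) (p ord0 j - del).
    split; lra.
  split; lra.
apply: sub.
split => // i j.
rewrite /ball /= (ord1 i) /y mxE; have [h1 h2] := H j.
have [h|h] := leP (b ord0 j) (p ord0 j - del).
  rewrite ger0_norm; lra.
rewrite ger0_norm; lra.
Qed.

Definition upd {R : realType} {d : nat} (a : 'rV[R]_d) (k : 'I_d) (v : R) : 'rV[R]_d :=
  \row_j (if j == k then v else a ord0 j).

Lemma cube_upd (R : realType) (d : nat) (a b : 'rV[R]_d) k v :
  unit_cube b (upd a k v) <->
  ((b ord0 k <= v /\ v < b ord0 k + 1) /\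
   forall j, j != k -> b ord0 j <= a ord0 j /\ a ord0 j < b ord0 j + 1).
Proof.
split.
  move=> H; split.
    by have := H k; rewrite /upd mxE eqxx.
  by move=> j jk; have := H j; rewrite /upd mxE (negbTE jk).
move=> [H1 H2] j; rewrite /upd mxE; case: eqP => [->//|/eqP jk]; exact: H2.
Qed.

Lemma cube_self (R : realType) (d : nat) (a : 'rV[R]_d) : unit_cube a a.
Proof. move=> j; split => //; lra. Qed.

Lemma cube_inj (R : realType) (d : nat) (a b : 'rV[R]_d) :
  unit_cube a = unit_cube b -> a = b.
Proof.
move=> E; apply/matrixP => i j; rewrite (ord1 i).
have ha := cube_self a; have hb := cube_self b.
rewrite E in ha; rewrite -E in hb.
have [h1 _] := ha j; have [h2 _] := hb j.
by apply/le_anti; rewrite h1 h2.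
Qed.

Lemma same_cube (R : realType) (d : nat) (P : set (set 'rV[R]_d)) X Y x :
  unit_cube_partition P -> P X -> P Y -> X x -> Y x -> X = Y.
Proof.
move=> [[_ [disj _]] _] PX PY Xx Yx.
case: (pselect (X = Y)) => // neq.
have := disj X Y PX PY neq.
move=> E; have : (X `&` Y) x by [].
by rewrite E.
Qed.

Lemma key (R : realType) (d : nat) (P : set (set 'rV[R]_d)) a b k :
  unit_cube_partition P -> P (unit_cube a) -> P (unit_cube b) ->
  unit_cube b (upd a k (a ord0 k - 1/2)) -> b ord0 k = a ord0 k - 1.
Proof.
move=> HP PX PY /cube_upd [[hb1 hb2] hbj].
have [h|h|h] := ltgtP (b ord0 k + 1) (a ord0 k); last by lra.
-
  have [[_ [_ cov]] cubes] := HP.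
  have [Z [PZ Zq]] := cov (upd a k (b ord0 k + 1)).
  have [z Zz] := cubes Z PZ; subst Z.
  move: (Zq) => /cube_upd [[hz1 hz2] hzj].
  have [h'|h'] := ltP (z ord0 k) (b ord0 k + 1).
    have E : unit_cube b = unit_cube z.
      apply: (same_cube (P := P) (x := upd a k (Num.max (b ord0 k) (z ord0 k)))) => //.
        apply/cube_upd; split => //.
        have [hm|hm] := leP (b ord0 k) (z ord0 k).
          by split; lra.
        by split; lra.
      apply/cube_upd; split => //.
      have [hm|hm] := leP (b ord0 k) (z ord0 k).
        by split; lra.
      by split; lra.
    rewrite -E in Zq; move: Zq => /cube_upd [[_ ?] _]; lra.
  have E : unit_cube a = unit_cube z.
    apply: (same_cube (P := P) (x := a)) => //; first exact: cube_self.
    move=> j; case: (eqVneq j k) => [->|jk]; first by split; lra.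
    exact: hzj.
  rewrite -E in Zq; move: Zq => /cube_upd [[? _] _]; lra.
- have E : unit_cube a = unit_cube b.
    apply: (same_cube (P := P) (x := a)) => //; first exact: cube_self.
    move=> j; case: (eqVneq j k) => [->|jk]; first by split; lra.
    exact: hbj.
  have : unit_cube b (upd a k (a ord0 k - 1/2)) by apply/cube_upd.
  rewrite -E => /cube_upd [[? _] _]; lra.
Qed.

Theorem mainTheorem2 (R : realType) (d : nat) (P : set (set 'rV[R]_d)) :
  unit_cube_partition P ->
  (exists p : 'rV[R]_d,
     exists f : 'I_d.+1 -> set 'rV[R]_d,
       injective f /\ (forall i, N0 P p (f i))) /\
  has_clique P d.+1.
Proof.
move=> HP.
suff [p [f [finj fN]]] : exists p : 'rV[R]_d,
     exists f : 'I_d.+1 -> set 'rV[R]_d,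
       injective f /\ (forall i, N0 P p (f i)).
  split; first by exists p, f.
  exists f; split => //; split; first by move=> i; have [] := fN i.
  move=> i j _; exists p; split; [by have [] := fN i | by have [] := fN j].
have [[_ [_ cov]] cubes] := HP.
have [X [PX _]] := cov 0.
have [a Xa] := cubes X PX; subst X.
have : forall k : 'I_d, exists Y, P Y /\ Y (upd a k (a ord0 k - 1/2)).
  by move=> k; exact: cov.
move=> /choice [Y HY].
have : forall k : 'I_d, exists b, Y k = unit_cube b.
  by move=> k; apply: cubes; have [] := HY k.
move=> /choice [g Hg].
have Hk : forall k, g k ord0 k = a ord0 k - 1.
  move=> k; apply: (key HP) => //; rewrite -Hg; by have [] := HY k.
have Hj : forall k j, j != k -> g k ord0 j <= a ord0 j /\ a ord0 j < g k ord0 j + 1.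
  move=> k j jk; have [_ ] := HY k; rewrite Hg => /cube_upd [_ H]; exact: H.
pose cf (i : 'I_d.+1) := if unlift ord0 i is Some k then g k else a.
exists a, (fun i => unit_cube (cf i)); split.
  move=> i j /cube_inj; rewrite /cf.
  case: (unliftP ord0 i) => [k ->|->]; case: (unliftP ord0 j) => [l ->|->] //.
  - move=> E; congr lift; apply/eqP; case: (eqVneq k l) => // kl.
    have lk : l != k by rewrite eq_sym.
    have := Hk l; have [_ h2] := Hj k l lk; rewrite E in h2 => hl; exfalso; clear -h2 hl; lra.
  - move=> E; have := Hk k; rewrite E => hl; exfalso; clear -hl; lra.
  - move=> E; have := Hk l; rewrite -E => hl; exfalso; clear -hl; lra.
move=> i; split.
  rewrite /cf; case: (unliftP ord0 i) => [k _|_] //.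
  by rewrite -Hg; have [] := HY k.
apply: closure_cube => j; rewrite /cf.
case: (unliftP ord0 i) => [k _|_]; last by split; lra.
case: (eqVneq j k) => [->|jk]; first by rewrite Hk; split; lra.
have [? ?] := Hj k j jk; split; lra.
Qed.
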